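(* The edge set of the complete graph $K_9$ cannot be partitioned into three subgraphs each isomorphic to $P_3 \square P_3$.
   Context: $P_n$ denotes the path graph on $n$ vertices and $K_m$ the complete graph on $m$ vertices. For graphs $G=(V,E)$ and $G'=(V',E')$, the Cartesian product $G \square G'$ has vertex set $V\times V'$, with $\{(v,v'),(w,w')\}$ an edge iff either $\{v,w\}\in E$ and $v'=w'$, or $v=w$ and $\{v',w'\}\in E'$. Thus $P_3\square P_3$ is the $3\times 3$ grid graph with 9 vertices and 12 edges. *)

(* Defs.v *)
From mathcomp Require Import all_boot.
Set Implicit Arguments. Unset Strict Implicit. Unset Printing Implicit Defensive.

Definition gridV := ('I_3 * 'I_3)%type.

Definition path3_adj (i j : 'I_3) : bool := (i.+1 == j :> nat) || (j.+1 == i :> nat).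

Definition grid_adj (u v : gridV) : bool :=
  (path3_adj u.1 v.1 && (u.2 == v.2)) || ((u.1 == v.1) && path3_adj u.2 v.2).

Definition K9_edges : {set {set 'I_9}} := [set e : {set 'I_9} | #|e| == 2].

Definition is_grid_copy (E : {set {set 'I_9}}) : Prop :=
  exists f : gridV -> 'I_9, injective f /\
    E = [set [set f p.1; f p.2] | p in [set p : gridV * gridV | grid_adj p.1 p.2]].

(* Main.v *)
Require Import Defs.
From mathcomp Require Import all_boot.
From mathcomp Require Import zify.

Set Implicit Arguments. Unset Strict Implicit. Unset Printing Implicit Defensive.

Fixpoint allp {T : eqType} (P : seq T -> bool) (n : nat) (s acc : seq T) : bool :=
  if n is n'.+1 then all (fun x => allp P n' (rem x s) (x :: acc)) s else P (rev acc).
Definition adjn (a b : nat) : bool :=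
  match a, b with
  | 0, 1 => true
  | 0, 3 => true
  | 1, 0 => true
  | 1, 2 => true
  | 1, 4 => true
  | 2, 1 => true
  | 2, 5 => true
  | 3, 0 => true
  | 3, 4 => true
  | 3, 6 => true
  | 4, 1 => true
  | 4, 3 => true
  | 4, 5 => true
  | 4, 7 => true
  | 5, 2 => true
  | 5, 4 => true
  | 5, 8 => true
  | 6, 3 => true
  | 6, 7 => true
  | 7, 4 => true
  | 7, 6 => true
  | 7, 8 => true
  | 8, 5 => true
  | 8, 7 => true
  | _, _ => false
  end.
Definition E12 : seq (nat * nat) := [:: (0, 1); (0, 3); (1, 2); (1, 4); (2, 5); (3, 4); (3, 6); (4, 5); (4, 7); (5, 8); (6, 7); (7, 8)].
Definition I9 := iota 0 9.
Definition degn (R : nat -> nat -> bool) a := count (R a) I9.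
Definition okdeg (a b : nat) :=
  ((a == 2) && (b == 3)) || ((a == 3) && (b == 2)) || ((a == 3) && (b == 4)) || ((a == 4) && (b == 3)).
Definition Pgood (R : nat -> nat -> bool) :=
  all (fun a => all (fun b => R a b ==> okdeg (degn R a) (degn R b)) I9) I9.
Definition Rn (t : seq nat) a b := (a != b) && ~~ adjn a b && ~~ adjn (nth 0 t a) (nth 0 t b).
Definition clash (t : seq nat) := has (fun e => adjn (nth 0 t e.1) (nth 0 t e.2)) E12.
Definition checkn (t : seq nat) := if clash t then true else ~~ Pgood (Rn t).
Lemma allcheck : allp checkn 9 I9 [::].
Proof. vm_compute. reflexivity. Qed.

Lemma allp_sound {T : eqType} (P : seq T -> bool) n : forall s acc,
  allp P n s acc -> size s = n -> forall t, perm_eq t s -> P (rev acc ++ t).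
Proof.
elim: n => [|n IH] s acc /= H Hs t Ht.
  have : size t = 0 by rewrite (perm_size Ht).
  by case: t Ht => // _ _; rewrite cats0.
have : size t = n.+1 by rewrite (perm_size Ht).
case: t Ht => [//|x t'] Ht _.
have xs : x \in s by rewrite -(perm_mem Ht) mem_head.
have := allP H x xs => H'.
have := IH _ _ H'; rewrite size_rem // Hs => /(_ erefl t').
rewrite rev_cons cat_rcons; apply.
by rewrite -(perm_cons x) (perm_trans Ht) // perm_to_rem.
Qed.

Definition code (u : gridV) : nat := 3 * u.1 + u.2.
Definition decode (n : nat) : gridV := (inord (n %/ 3), inord (n %% 3)).

Lemma code_lt u : code u < 9.
Proof. case: u => [[a Ha] [b Hb]]; rewrite /code /=; lia. Qed.

Lemma codeK : cancel code decode.
Proof.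
case=> [[a Ha] [b Hb]]; rewrite /code /decode /=.
by congr (_, _); apply/val_inj; rewrite /= inordK; lia.
Qed.

Lemma decodeK n : n < 9 -> code (decode n) = n.
Proof. by move=> Hn; rewrite /code /decode /= !inordK; lia. Qed.

Lemma adj_code u v : grid_adj u v = adjn (code u) (code v).
Proof.
case: u => [[a Ha] [b Hb]]; case: v => [[c Hc] [d Hd]].
rewrite /grid_adj /path3_adj /code /=.
move: Ha Hb Hc Hd.
case: a => [|[|[|a]]] //; case: b => [|[|[|b]]] //;
case: c => [|[|[|c]]] //; case: d => [|[|[|d]]] //.
Qed.

Lemma adjn_irr n : adjn n n = false.
Proof. by do 9?case: n => [//|n]. Qed.

Lemma adjn_sym a b : adjn a b = adjn b a.
Proof. by do 9?case: a => [|a]; do 9?case: b => [|b]. Qed.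

Lemma gadj_irr u : grid_adj u u = false.
Proof. by rewrite adj_code adjn_irr. Qed.

Lemma gadj_sym u v : grid_adj u v = grid_adj v u.
Proof. by rewrite !adj_code adjn_sym. Qed.

Notation gedges f :=
  [set [set f p.1; f p.2] | p in [set p : gridV * gridV | grid_adj p.1 p.2]].

Lemma memE (f : gridV -> 'I_9) u v : injective f ->
  ([set f u; f v] \in gedges f) = grid_adj u v.
Proof.
move=> fi; apply/imsetP/idP => [[[p1 p2]] | H]; last first.
  by exists (u, v); rewrite // inE.
rewrite inE /= => Hp /setP E.
move: (E (f p1)); rewrite set21 => /set2P [] /fi Hu;
move: (E (f p2)); rewrite set22 => /set2P [] /fi Hv; subst => //; try by rewrite gadj_irr in Hp.
all: by rewrite gadj_sym.
Qed.

Lemma permI (h : gridV -> gridV) : injective h ->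
  perm_eq (map (fun a => code (h (decode a))) I9) I9.
Proof.
move=> hi.
have U1 : uniq (map (fun a => code (h (decode a))) I9).
  rewrite map_inj_in_uniq ?iota_uniq // => a b.
  rewrite !mem_iota !add0n => /andP [_ Ha] /andP [_ Hb] /(can_inj codeK) /hi E.
  by rewrite -(decodeK Ha) -(decodeK Hb) E.
have Sub : {subset map (fun a => code (h (decode a))) I9 <= I9}.
  by move=> x /mapP [a _ ->]; rewrite mem_iota add0n code_lt.
have Sz : size I9 <= size (map (fun a => code (h (decode a))) I9).
  by rewrite size_map.
have [_ E] := uniq_min_size U1 Sub Sz.
by apply: uniq_perm => //; apply: iota_uniq.
Qed.

Lemma nth_code (h : gridV -> gridV) a : a < 9 ->
  nth 0 (map (fun a => code (h (decode a))) I9) a = code (h (decode a)).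
Proof. by move=> Ha; rewrite (nth_map 0) ?size_iota // nth_iota. Qed.

Lemma Pgood_ext R R' : (forall a b, a < 9 -> b < 9 -> R a b = R' a b) ->
  Pgood R = Pgood R'.
Proof.
move=> E.
have D a : a < 9 -> degn R a = degn R' a.
  move=> Ha; apply: eq_in_count => b; rewrite mem_iota add0n => /andP [_ Hb].
  by apply: E.
rewrite /Pgood; apply: eq_in_all => a; rewrite mem_iota add0n => /andP [_ Ha].
apply: eq_in_all => b; rewrite mem_iota add0n => /andP [_ Hb].
by rewrite /= E // !D.
Qed.

Lemma Pgood_perm k : perm_eq (map k I9) I9 -> Pgood (fun a b => adjn (k a) (k b)).
Proof.
move=> Hk.
have Pg : Pgood adjn by [].
have D a : degn (fun a b => adjn (k a) (k b)) a = degn adjn (k a).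
  by rewrite /degn -(permP Hk (adjn (k a))) count_map.
have kI x : x \in I9 -> k x \in I9 by move=> Hx; rewrite -(perm_mem Hk); apply: map_f.
apply/allP => a Ha; apply/allP => b Hb; apply/implyP => Hab; rewrite !D.
exact: (implyP (allP (allP Pg _ (kI _ Ha)) _ (kI _ Hb)) Hab).
Qed.

Theorem theorem3 :
  ~ (exists E1 E2 E3 : {set {set 'I_9}},
        [/\ is_grid_copy E1, is_grid_copy E2, is_grid_copy E3,
            [/\ [disjoint E1 & E2], [disjoint E1 & E3] & [disjoint E2 & E3]] &
            E1 :|: E2 :|: E3 = K9_edges]).
Proof.
move=> [E1 [E2 [E3 [[f1 [i1 ->]] [f2 [i2 ->]] [f3 [i3 ->]] [d12 d13 d23] U]]]].
have c : #|'I_9| <= #|{: 'I_3 * 'I_3}| by rewrite card_prod !card_ord.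
have [g2 K2 K2'] := inj_card_bij i2 c.
have [g3 K3 K3'] := inj_card_bij i3 c.
pose h2 x := g2 (f1 x); pose h3 x := g3 (f1 x).
have m1 x y : ([set f1 x; f1 y] \in gedges f1) = grid_adj x y := memE _ _ i1.
have m2 x y : ([set f1 x; f1 y] \in gedges f2) = grid_adj (h2 x) (h2 y).
  by rewrite -(memE _ _ i2) !K2'.
have m3 x y : ([set f1 x; f1 y] \in gedges f3) = grid_adj (h3 x) (h3 y).
  by rewrite -(memE _ _ i3) !K3'.
have F1 x y : grid_adj x y -> grid_adj (h2 x) (h2 y) = false.
  by move=> H; rewrite -m2; apply: (disjointFr d12); rewrite m1.
have F3 x y : grid_adj (h3 x) (h3 y) ->
    grid_adj x y = false /\ grid_adj (h2 x) (h2 y) = false.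
  rewrite -m3 => H; split.
    by rewrite -m1; apply: (disjointFl d13 H).
  by rewrite -m2; apply: (disjointFl d23 H).
have F2 x y : x != y ->
    [|| grid_adj x y, grid_adj (h2 x) (h2 y) | grid_adj (h3 x) (h3 y)].
  move=> H.
  have : [set f1 x; f1 y] \in K9_edges by rewrite inE cards2 (inj_eq i1) H.
  by rewrite -U !in_setU m1 m2 m3 orbA.
have Key x y : grid_adj (h3 x) (h3 y) =
    [&& x != y, ~~ grid_adj x y & ~~ grid_adj (h2 x) (h2 y)].
  case: (eqVneq x y) => [<-|Hxy] /=; first by rewrite gadj_irr.
  case H3: (grid_adj (h3 x) (h3 y)).
    by have [-> ->] := F3 _ _ H3.
  by move: (F2 _ _ Hxy); rewrite H3 orbF => /orP [] ->; rewrite ?andbF.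
have hinj2 : injective h2 by apply: inj_comp; [apply: (can_inj K2') | apply: i1].
have hinj3 : injective h3 by apply: inj_comp; [apply: (can_inj K3') | apply: i1].
have Ct := allp_sound allcheck erefl (permI hinj2).
rewrite /= /checkn in Ct.
have NC : clash (map (fun a => code (h2 (decode a))) I9) = false.
  apply/negbTE/hasPn => e He.
  have HE : all (fun e => [&& adjn e.1 e.2, e.1 < 9 & e.2 < 9]) E12 by [].
  case/and3P: (allP HE e He) => Ha H1 H2.
  rewrite !nth_code // -adj_code F1 //.
  by rewrite adj_code !decodeK.
rewrite NC in Ct.
have KeyN a b : a < 9 -> b < 9 ->
    Rn (map (fun a => code (h2 (decode a))) I9) a b =
    adjn (code (h3 (decode a))) (code (h3 (decode b))).
  move=> Ha Hb; rewrite /Rn !nth_code //.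
  rewrite -(decodeK Ha) -(decodeK Hb) !codeK.
  by rewrite (inj_eq (can_inj codeK)) -!adj_code Key andbA.
have := Pgood_perm (permI hinj3).
by rewrite -(Pgood_ext KeyN) (negbTE Ct).
Qed.
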